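(* Let $\mathcal{C}$ be a finite set of classes and let $(\ell_\star, \ell_1, \dots, \ell_K)$ be a random tuple of $\mathcal{C}$-valued labels ($\ell_\star$ the oracle label, $\ell_i$ the label of annotator $i$) such that $\mathbb{P}(\ell_i = \ell_\star \mid \ell_j = \ell_\star) \ge \mathbb{P}(\ell_i = \ell_\star)$ for all $i, j \in \{1,\dots,K\}$ with $\mathbb{P}(\ell_j = \ell_\star) > 0$. Let $(\ell_\star^{(n)}, \ell_1^{(n)}, \dots, \ell_K^{(n)})$, $n = 1, \dots, N$, be $N$ independent copies of this tuple (labels on $N$ independently sampled data points), and define the empirical agreement ratios $$\mathbb{P}^{(N)}(\ell_i = \ell_j) = \frac{1}{N}\sum_{n=1}^N \big[\ell_i^{(n)} = \ell_j^{(n)}\big].$$ Then for every $t_u > 0$, with probability at least $1 - \delta_u$ where $\delta_u = \exp(-2 N t_u^2)$, $$\frac{1}{K}\sum_{i=1}^K \mathbb{P}(\ell_i = \ell_\star) \le \sqrt{t_u + \frac{1}{K^2}\sum_{i=1}^K\sum_{j=1}^K \mathbb{P}^{(N)}(\ell_i = \ell_j)}.$$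
   Context: $[\cdot]$ denotes the Iverson bracket (1 if the statement holds, 0 otherwise). $\frac{1}{K}\sum_{i}\mathbb{P}(\ell_i = \ell_\star)$ is the oracle accuracy of the average annotator (an annotator chosen uniformly at random among the $K$). *)

(* Defs.v *)
From HB Require Import structures.
From mathcomp Require Import all_boot all_order all_algebra.
From mathcomp Require Import reals.
From mathcomp Require Import sequences exp.
Set Implicit Arguments. Unset Strict Implicit. Unset Printing Implicit Defensive.
Import Order.TTheory GRing.Theory Num.Theory.
Local Open Scope ring_scope.

(* A label tuple: (oracle label, labels of annotators 0..K-1). *)
Definition labels (C : finType) (K : nat) : finType :=
  (C * {ffun 'I_K -> C})%type.

Definition is_pmf (R : realType) (T : finType) (p : T -> R) : Prop :=
  (forall x, 0 <= p x) /\ \sum_(x : T) p x = 1.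

Definition Pr (R : realType) (T : finType) (p : T -> R) (A : pred T) : R :=
  \sum_(x : T | A x) p x.

Definition iid (R : realType) (T : finType) (N : nat) (p : T -> R)
  (s : {ffun 'I_N -> T}) : R := \prod_(n < N) p (s n).

Definition emp_agree (C : finType) (K N : nat) (R : realType)
  (s : {ffun 'I_N -> labels C K}) (i j : 'I_K) : R :=
  (\sum_(n < N) (((s n).2 i == (s n).2 j) : nat)%:R) / N%:R.

(* Main.v *)
Require Import Defs.
From HB Require Import structures.
From mathcomp Require Import all_boot all_order all_algebra.
From mathcomp Require Import reals.
From mathcomp Require Import sequences exp.
From mathcomp Require Import all_classical all_reals all_analysis.
From mathcomp Require Import lra ring.
Import Order.TTheory GRing.Theory Num.Theory.
Import numFieldNormedType.Exports.
Local Open Scope ring_scope.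
Local Open Scope classical_set_scope.

Section Key.
Variable R : realType.
Variable th : R.
Hypothesis th0 : 0 <= th.
Hypothesis th1 : th <= 1.

Let D (u : R) := 1 - th + th * expR u.

Let D_gt0 u : 0 < D u.
Proof.
rewrite /D; have e0 := expR_gt0 u.
have [->|thp] := eqVneq th 1; first by rewrite subrr add0r mul1r.
have h1 : th < 1 by rewrite lt_neqAle thp th1.
have := mulr_ge0 th0 (ltW e0); lra.
Qed.

Let D_neq0 u : D u != 0.
Proof. by rewrite gt_eqF. Qed.

Let D_der (u : R) : is_derive u (1:R) D (th * expR u).
Proof. by rewrite /D; apply: is_derive_eq; rewrite add0r mul1r. Qed.

Let h1 (u : R) := th + u / 4 - 1 + (1 - th) * (D u)^-1.

Let h1_der (u : R) : is_derive u (1:R) h1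
   (1/4 - (1 - th) * th * expR u / (D u) ^+ 2).
Proof.
have := is_deriveV (D_neq0 u) (D_der u) => HV.
rewrite /h1; apply: is_derive_eq.
have sE : forall a b : R, a *: b = a * b by [].
rewrite !scaler0 add0r mul1r subr0 !sE mulr1.
have := D_neq0 u; set d := D u => dn0.
field.
by rewrite dn0.
Qed.


Let h1_ge0 u : 0 <= u -> 0 <= h1 u.
Proof.
move=> u0.
have -> : 0 = h1 0 by rewrite /h1 /D expR0 mulr1 subrK invr1 mulr1 mul0r addr0; ring.
apply: (@ger0_derive1_ndecr R h1 0 u) => //.
- move=> x _; rewrite derive1E; have [_ ->] := h1_der x.
  have e0 := expR_gt0 x.
  rewrite subr_ge0 ler_pdivrMr ?exprn_gt0 //.
  have := sqr_ge0 ((1 - th) - th * expR x); rewrite /D; nra.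
- by apply: derivable_within_continuous => x _; case: (h1_der x).
Qed.

Let P (u : R) := - (th * u + u ^+ 2 / 8).
Let m (u : R) := D u * expR (P u).

Let m_der (u : R) : is_derive u (1:R) m (- (expR (P u) * D u * h1 u)).
Proof.
have HP : is_derive u (1:R) P (- (th + u / 4)).
  rewrite /P; apply: is_derive_eq.
  have sE : forall a b : R, a *: b = a * b by [].
  by rewrite !sE !mulr0 add0r mulr1; field.
have HE : is_derive u (1:R) (fun x => expR (P x)) (expR (P u) * - (th + u / 4)).
  exact: (@is_derive1_comp R expR P u _ _ (is_derive_expR (P u)) HP).
rewrite /m; apply: is_derive_eq.
have sE : forall a b : R, a *: b = a * b by [].
rewrite !sE add0r mul1r /h1.
have dn0 := D_neq0 u; rewrite /D in dn0 *.
move: (expR (P u)) (expR u) dn0 => E e dn0.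
field.
by rewrite dn0.
Qed.

Lemma key_ineq u : 0 <= u -> 1 - th + th * expR u <= expR (th * u + u ^+ 2 / 8).
Proof.
move=> u0.
have : m u <= m 0.
  apply: (@ler0_derive1_nincr R m 0 u) => //.
  - move=> x; rewrite in_itv /= => /andP[x0 _].
    rewrite derive1E; have [_ ->] := m_der x.
    rewrite oppr_le0 mulr_ge0 ?mulr_ge0 ?expR_ge0 ?(ltW (D_gt0 _)) //.
    exact: h1_ge0 (ltW x0).
  - by apply: derivable_within_continuous => x _; case: (m_der x).
rewrite /m /P /D expR0 mulr1 subrK mulr0 expr0n /= mul0r addr0 oppr0 expR0 mulr1.
by rewrite expRN ler_pdivrMr ?expR_gt0 // mul1r.
Qed.
End Key.

Lemma conv_exp (R : realType) (a b s : R) : 0 <= s <= 1 ->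
  expR ((1 - s) * a + s * b) <= (1 - s) * expR a + s * expR b.
Proof.
move=> /andP[s0 s1]; set z := (1 - s) * a + s * b.
have e0 : (1 - s) * (a - z) + s * (b - z) = 0 by rewrite /z; ring.
have -> : expR z = (1 - s) * (expR z * (1 + (a - z))) + s * (expR z * (1 + (b - z))).
  transitivity (expR z * (1 + ((1 - s) * (a - z) + s * (b - z)))).
    by rewrite e0 addr0 mulr1.
  ring.
have hh : forall c, expR z * (1 + (c - z)) <= expR c.
  move=> c; have h := ler_wpM2l (expR_ge0 z) (expR_ge1Dx (c - z)).
  have e : z + (c - z) = c by ring.
  by move: h; rewrite -expRD e.
by apply: lerD; apply: ler_wpM2l; rewrite ?subr_ge0.
Qed.

Lemma hoeff_lemma (R : realType) (T : finType) (p : T -> R)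
  (p0 : forall x, 0 <= p x) (p1 : \sum_x p x = 1)
  (f : T -> R) (f01 : forall x, 0 <= f x <= 1) (lam : R) (lam0 : 0 <= lam) :
  \sum_x p x * expR (lam * ((\sum_y p y * f y) - f x)) <= expR (lam ^+ 2 / 8).
Proof.
set mu := \sum_y p y * f y.
have mu0 : 0 <= mu.
  by apply: sumr_ge0 => x _; rewrite mulr_ge0 //; case/andP: (f01 x).
have mu1 : mu <= 1.
  rewrite -p1; apply: ler_sum => x _; rewrite -[leRHS]mulr1; apply: ler_wpM2l => //.
  by case/andP: (f01 x).
set E1 := expR (lam * mu); set E2 := expR (lam * (mu - 1)).
apply: (@le_trans _ _ (\sum_x p x * ((1 - f x) * E1 + f x * E2))).
  apply: ler_sum => x _; apply: ler_wpM2l => //.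
  have := @conv_exp R (lam * mu) (lam * (mu - 1)) (f x) (f01 x).
  by have -> : (1 - f x) * (lam * mu) + f x * (lam * (mu - 1)) = lam * (mu - f x) by ring.
rewrite (eq_bigr (fun x => p x * E1 + (p x * f x) * (E2 - E1))); last first.
  by move=> x _; ring.
rewrite big_split /= -!mulr_suml p1 -/mu.
have -> : E1 = E2 * expR lam by rewrite /E1 /E2 -expRD; congr expR; ring.
have -> : 1 * (E2 * expR lam) + mu * (E2 - E2 * expR lam)
   = E2 * (1 - (1 - mu) + (1 - mu) * expR lam) by ring.
apply: (@le_trans _ _ (E2 * expR ((1 - mu) * lam + lam ^+ 2 / 8))).
  apply: ler_wpM2l; first exact: expR_ge0.
  apply: key_ineq => //; rewrite ?subr_ge0 //.
  by rewrite lerBlDr lerDl.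
rewrite /E2 -expRD.
by have -> : lam * (mu - 1) + ((1 - mu) * lam + lam ^+ 2 / 8) = lam ^+ 2 / 8 by ring.
Qed.

Lemma hoeff_tail (R : realType) (T : finType) (p : T -> R)
  (p0 : forall x, 0 <= p x) (p1 : \sum_x p x = 1)
  (f : T -> R) (f01 : forall x, 0 <= f x <= 1) (N : nat) (hN : (0 < N)%N)
  (t : R) (ht : 0 < t) :
  1 - expR (- (2 * N%:R * t ^+ 2)) <=
  \sum_(s : {ffun 'I_N -> T} | (\sum_y p y * f y) - t <= N%:R^-1 * \sum_(n < N) f (s n))
     \prod_(n < N) p (s n).
Proof.
set mu := \sum_y p y * f y.
set A := (fun s : {ffun 'I_N -> T} => mu - t <= N%:R^-1 * \sum_(n < N) f (s n)).
set iid := (fun s : {ffun 'I_N -> T} => \prod_(n < N) p (s n)).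
have iid0 : forall s, 0 <= iid s by move=> s; apply: prodr_ge0.
have iid1 : \sum_s iid s = 1.
  rewrite /iid -(bigA_distr_bigA (fun (n : 'I_N) x => p x)) /=.
  by rewrite (eq_bigr (fun _ => 1)) ?prodr_const ?expr1n // => n _; rewrite p1.
have hsplit : \sum_s iid s = \sum_(s | A s) iid s + \sum_(s | ~~ A s) iid s.
  by rewrite (bigID A).
suff H : \sum_(s | ~~ A s) iid s <= expR (- (2 * N%:R * t ^+ 2)).
  rewrite -/(A _); move: H hsplit; rewrite iid1 /iid; lra.
have Npos : 0 < N%:R :> R by rewrite ltr0n.
set lam := 4 * t.
have lam0 : 0 < lam by rewrite /lam mulr_gt0.
apply: (@le_trans _ _ (\sum_s iid s * expR (lam * \sum_(n < N) (mu - f (s n)) - lam * (N%:R * t)))).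
  rewrite big_mkcond; apply: ler_sum => s _; case: ifP => HA; last first.
    by rewrite mulr_ge0 ?expR_ge0.
  rewrite -[leLHS]mulr1; apply: ler_wpM2l => //.
  apply: le_trans (expR_ge1Dx _); rewrite lerDl.
  move: HA; rewrite /A -ltNge.
  set S := \sum_(n < N) f (s n) => HY.
  rewrite sumrB -/S sumr_const card_ord -[mu *+ N]mulr_natr.
  have SE : S = N%:R * (N%:R^-1 * S) by rewrite mulrA mulfV ?mul1r // gt_eqF.
  rewrite SE.
  have -> : lam * (mu * N%:R - N%:R * (N%:R^-1 * S)) - lam * (N%:R * t)
     = (lam * N%:R) * (mu - t - N%:R^-1 * S) by ring.
  apply: mulr_ge0; first by apply: mulr_ge0; apply: ltW.
  by rewrite subr_ge0; apply: ltW.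
set M := \sum_x p x * expR (lam * (mu - f x)).
have -> : \sum_s iid s * expR (lam * \sum_(n < N) (mu - f (s n)) - lam * (N%:R * t))
   = expR (- (lam * (N%:R * t))) * M ^+ N.
  have -> : M ^+ N = \prod_(n < N) M by rewrite prodr_const card_ord.
  rewrite /M bigA_distr_bigA mulr_sumr.
  apply: eq_bigr => s _.
  rewrite expRD [expR (lam * _) * _]mulrC mulrCA; congr (_ * _).
  rewrite mulr_sumr expR_sum /iid -big_split /=.
  by apply: eq_bigr.
have M0 : 0 <= M by apply: sumr_ge0 => x _; rewrite mulr_ge0 ?expR_ge0.
have MN : M ^+ N <= expR (lam ^+ 2 / 8) ^+ N.
  apply: lerXn2r; rewrite ?nnegrE ?expR_ge0 //.
  exact: hoeff_lemma (ltW lam0).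
apply: (@le_trans _ _ (expR (- (lam * (N%:R * t))) * expR (lam ^+ 2 / 8) ^+ N)).
  by apply: ler_wpM2l; rewrite ?expR_ge0.
rewrite -expRM_natl -expRD.
by have -> : - (lam * (N%:R * t)) + N%:R * (lam ^+ 2 / 8) = - (2 * N%:R * t ^+ 2)
  by rewrite /lam; field.
Qed.

Local Close Scope classical_set_scope.

Theorem theorem5 (R : realType) (C : finType) (K N : nat)
  (p : labels C K -> R) (hp : is_pmf p) (hK : (0 < K)%N) (hN : (0 < N)%N)
  (hcond : forall i j : 'I_K,
     0 < Pr p (fun x => x.2 j == x.1) ->
     Pr p (fun x => (x.2 i == x.1) && (x.2 j == x.1)) / Pr p (fun x => x.2 j == x.1)
       >= Pr p (fun x => x.2 i == x.1))
  (t : R) (ht : 0 < t) :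
  Pr (@iid R _ N p)
     (fun s => (K%:R)^-1 * \sum_(i < K) Pr p (fun x => x.2 i == x.1)
               <= Num.sqrt (t + (K%:R ^+ 2)^-1 *
                            \sum_(i < K) \sum_(j < K) emp_agree R s i j))
  >= 1 - expR (- (2 * N%:R * t ^+ 2)).
Proof.
case: hp => p0 p1.
pose ind (x : labels C K) (i j : 'I_K) : R := ((x.2 i == x.2 j) : nat)%:R.
pose f (x : labels C K) : R := (K%:R ^+ 2)^-1 * \sum_(i < K) \sum_(j < K) ind x i j.
have Kpos : 0 < K%:R :> R by rewrite ltr0n.
have K2pos : 0 < K%:R ^+ 2 :> R by rewrite exprn_gt0.
have ind0 : forall x i j, 0 <= ind x i j by move=> x i j; rewrite ler0n.
have f01 : forall x, 0 <= f x <= 1.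
  move=> x; apply/andP; split.
    by rewrite mulr_ge0 ?invr_ge0 ?(ltW K2pos) //; do 2 (apply: sumr_ge0 => ? _).
  rewrite ler_pdivrMl // mulr1.
  apply: (@le_trans _ _ (\sum_(i < K) \sum_(j < K) (1 : R))).
    by do 2 (apply: ler_sum => ? _); rewrite /ind; case: (_ == _).
  by rewrite sumr_const sumr_const card_ord -mulr_natr -[_ *+ _]mulr_natr mul1r expr2.
set a := fun i : 'I_K => Pr p (fun x => x.2 i == x.1).
set mu := \sum_y p y * f y.
have a0 : forall i, 0 <= a i by move=> i; apply: sumr_ge0 => x _.
have Sa0 : 0 <= (K%:R)^-1 * \sum_(i < K) a i.
  by rewrite mulr_ge0 ?invr_ge0 ?(ltW Kpos) // sumr_ge0.
have Sa2 : ((K%:R)^-1 * \sum_(i < K) a i) ^+ 2 <= mu.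
  have -> : ((K%:R)^-1 * \sum_(i < K) a i) ^+ 2
      = (K%:R ^+ 2)^-1 * \sum_(i < K) \sum_(j < K) a i * a j.
    rewrite exprMn exprVn; congr (_ * _).
    by rewrite expr2 mulr_suml; apply: eq_bigr => i _; rewrite mulr_sumr.
  have -> : mu = (K%:R ^+ 2)^-1 * \sum_(i < K) \sum_(j < K) \sum_x p x * ind x i j.
    rewrite /mu /f.
    under eq_bigr do rewrite mulrCA.
    rewrite -mulr_sumr; congr (_ * _).
    under eq_bigr do rewrite mulr_sumr.
    rewrite exchange_big /=; apply: eq_bigr => i _.
    under eq_bigr do rewrite mulr_sumr.
    by rewrite exchange_big.
  apply: ler_wpM2l; first by rewrite invr_ge0 ltW.
  apply: ler_sum => i _; apply: ler_sum => j _.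
  apply: (@le_trans _ _ (Pr p (fun x => (x.2 i == x.1) && (x.2 j == x.1)))).
    have [ajp|aj0] := ltrP 0 (a j).
      by have := hcond i j ajp; rewrite ler_pdivlMr.
    have -> : a j = 0 by apply/le_anti; rewrite aj0 a0.
    by rewrite mulr0; apply: sumr_ge0 => x _.
  rewrite /Pr big_mkcond; apply: ler_sum => x _.
  case: ifP => [/andP[/eqP h1 /eqP h2]|_]; last by rewrite mulr_ge0.
  by rewrite /ind h1 h2 eqxx mulr1.
have hY : forall s : {ffun 'I_N -> labels C K},
    (K%:R ^+ 2)^-1 * \sum_(i < K) \sum_(j < K) emp_agree R s i j
    = N%:R^-1 * \sum_(n < N) f (s n).
  move=> s.
  have E1 : \sum_(i < K) \sum_(j < K) emp_agree R s i j
      = N%:R^-1 * \sum_(i < K) \sum_(j < K) \sum_(n < N) ind (s n) i j.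
    rewrite mulr_sumr; apply: eq_bigr => i _; rewrite mulr_sumr.
    by apply: eq_bigr => j _; rewrite /emp_agree mulrC.
  have E2 : \sum_(n < N) f (s n)
      = (K%:R ^+ 2)^-1 * \sum_(i < K) \sum_(j < K) \sum_(n < N) ind (s n) i j.
    rewrite /f -mulr_sumr; congr (_ * _).
    rewrite exchange_big /=; apply: eq_bigr => i _.
    by rewrite exchange_big.
  by rewrite E1 E2 mulrCA.
apply: le_trans (@hoeff_tail R _ p p0 p1 f f01 N hN t ht) _.
rewrite /Pr /iid [leRHS]big_mkcond [leLHS]big_mkcond; apply: ler_sum => s _.
case: ifP => HA; last by case: ifP => // _; apply: prodr_ge0.
suff -> : (K%:R)^-1 * \sum_(i < K) a i
   <= Num.sqrt (t + (K%:R ^+ 2)^-1 * \sum_(i < K) \sum_(j < K) emp_agree R s i j) by [].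
rewrite hY -(ger0_norm Sa0) -sqrtr_sqr ler_sqrt; last first.
  by rewrite addr_ge0 ?(ltW ht) // mulr_ge0 ?invr_ge0 ?ler0n // sumr_ge0 // => n _; case/andP: (f01 (s n)).
move: HA; rewrite -/mu => HA.
apply: le_trans Sa2 _; lra.
Qed.
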